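(* Let $\mathcal{D}$ be a DAG on vertex set $[p]$, let $\mathcal{V} \subseteq [p]$, and let $k \in \mathcal{V}$. If $R_{\mathcal{D}}(\mathcal{V}, k) > 0$, then $k \in \mathrm{Maximal}(\mathcal{D}, \mathcal{V})$, i.e. no (proper) descendant of $k$ in $\mathcal{D}$ lies in $\mathcal{V}$.
   Context: For a DAG $\mathcal{D}$ on $[p]$ and $i, j \in [p]$, $S \subseteq [p]\setminus\{i,j\}$, write $i \not\perp\!\!\!\perp_{\mathcal{D}} j \mid S$ if $i$ and $j$ are d-connected given $S$ in $\mathcal{D}$. For $\mathcal{V} \subseteq [p]$, the moral subgraph $\mathcal{M}_{\mathcal{V}}(\mathcal{D})$ is the undirected graph with vertex set $\mathcal{V}$ and edge set $\{ i - j : i \neq j \in \mathcal{V},\ i \not\perp\!\!\!\perp_{\mathcal{D}} j \mid \mathcal{V}\setminus\{i,j\}\}$. $\mathcal{G}[W]$ denotes the induced subgraph of an undirected graph $\mathcal{G}$ on $W$, and $\mathcal{V}\setminus k := \mathcal{V}\setminus\{k\}$. The removed edge set is $\mathcal{R}_{\mathcal{D}}(\mathcal{V}, k) = \mathcal{M}_{\mathcal{V}}(\mathcal{D})[\mathcal{V}\setminus k] \setminus \mathcal{M}_{\mathcal{V}\setminus k}(\mathcal{D})$ (edges of the induced subgraph of $\mathcal{M}_{\mathcal{V}}(\mathcal{D})$ on $\mathcal{V}\setminus k$ that are absent from $\mathcal{M}_{\mathcal{V}\setminus k}(\mathcal{D})$), and the removal score is $R_{\mathcal{D}}(\mathcal{V},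 k) = |\mathcal{R}_{\mathcal{D}}(\mathcal{V}, k)|$. With $\mathrm{de}_{\mathcal{D}}(v)$ the set of descendants of $v$ in $\mathcal{D}$ (nodes reachable from $v$ by a nonempty directed path, excluding $v$ itself), $\mathrm{Maximal}(\mathcal{D}, \mathcal{V}) := \{ v \in \mathcal{V} : \mathrm{de}_{\mathcal{D}}(v) \cap \mathcal{V} = \emptyset \}$. *)

(* Defs.v *)
From mathcomp Require Import all_boot.
From mathcomp Require Import boolp.
Set Implicit Arguments. Unset Strict Implicit. Unset Printing Implicit Defensive.

Section DAG.
Variable p : nat.
(* A directed graph on [p] = 'I_p : E u v means there is an arrow u -> v. *)
Variable E : rel 'I_p.

Definition desc (v w : 'I_p) : bool := [exists u, E v u && connect E u w].

Definition de (v : 'I_p) : {set 'I_p} := [set w | desc v w].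

Definition acyclic : Prop := forall v : 'I_p, ~~ desc v v.

Definition adj (u v : 'I_p) : bool := E u v || E v u.

(* i and j are d-connected given S: there is a (simple) path
   i = x_0 - x_1 - ... - x_m = j in the skeleton such that every collider
   x_n (x_{n-1} -> x_n <- x_{n+1}) is in S or has a descendant in S, and
   every non-collider internal vertex is not in S. *)
Definition dconnected (i j : 'I_p) (S : {set 'I_p}) : Prop :=
  exists s : seq 'I_p,
    let l := i :: rcons s j in
    [/\ path adj i (rcons s j), uniq l &
      forall n, 0 < n -> n < (size l).-1 ->
        let u := nth i l n.-1 in
        let v := nth i l n in
        let w := nth i l n.+1 in
        if E u v && E w v then (v \in S) || [exists t in S, desc v t]
        else v \notin S].

Definition moral_edge (V : {set 'I_p}) (i j : 'I_p) : bool :=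
  [&& i != j, i \in V, j \in V & `[< dconnected i j (V :\ i :\ j) >]].

Definition moral (V : {set 'I_p}) : {set {set 'I_p}} :=
  [set e : {set 'I_p} | [exists i, exists j, (e == [set i; j]) && moral_edge V i j]].

(* R_D(V,k): edges of M_V(D)[V \ k] absent from M_{V\k}(D) *)
Definition removed (V : {set 'I_p}) (k : 'I_p) : {set {set 'I_p}} :=
  [set e in moral V | (e \subset V :\ k) && (e \notin moral (V :\ k))].

Definition removal_score (V : {set 'I_p}) (k : 'I_p) : nat := #|removed V k|.

Definition Maximal (V : {set 'I_p}) : {set 'I_p} :=
  [set v in V | de v :&: V == set0].

End DAG.

(* Main.v *)
Require Import Defs.
From mathcomp Require Import all_boot.
From mathcomp Require Import boolp.

Definition tri {p : nat} (E : rel 'I_p) (S : {set 'I_p}) (u v w : 'I_p) : bool :=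
  if E u v && E w v then (v \in S) || [exists t in S, desc E v t] else v \notin S.

Fixpoint trips {p : nat} (E : rel 'I_p) (S : {set 'I_p}) (l : seq 'I_p) : bool :=
  if l is u :: r then
    (if r is v :: r' then (if r' is w :: _ then tri E S u v w && trips E S r else true) else true)
  else true.

Lemma trips_cons {p} (E : rel 'I_p) S x y t :
  trips E S (x :: y :: t) = (if t is z :: _ then tri E S x y z else true) && trips E S (y :: t).
Proof. by case: t. Qed.

Lemma trips_tail {p} (E : rel 'I_p) S x t : trips E S (x :: t) -> trips E S t.
Proof. by case: t => // y t; rewrite trips_cons => /andP[]. Qed.

Lemma trips_suffix {p} (E : rel 'I_p) S s t : trips E S (s ++ t) -> trips E S t.
Proof. elim: s => //= x s IH H; apply: IH; exact: trips_tail H. Qed.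

Lemma trips_cat {p} (E : rel 'I_p) S u s v t :
  trips E S (u :: s ++ v :: t) = trips E S (u :: rcons s v) && trips E S (last u s :: v :: t).
Proof.
elim: s u => [|a s IH] u.
  by case: t => [|z t] //=; rewrite andbT.
rewrite cat_cons rcons_cons.
have -> : trips E S (u :: a :: s ++ v :: t) =
   tri E S u a (head v s) && trips E S (a :: s ++ v :: t) by rewrite trips_cons; case: s {IH}.
have -> : trips E S (u :: a :: rcons s v) =
   tri E S u a (head v s) && trips E S (a :: rcons s v) by rewrite trips_cons; case: s {IH}.
by rewrite IH andbA.
Qed.

Lemma tri_sym {p} (E : rel 'I_p) S u v w : tri E S u v w = tri E S w v u.
Proof. by rewrite /tri andbC. Qed.

Lemma trips_rcons {p} (E : rel 'I_p) S s a b c :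
  trips E S (rcons (rcons (rcons s a) b) c) = trips E S (rcons (rcons s a) b) && tri E S a b c.
Proof.
have C1 : forall x q, trips E S (x :: q) =
   (match q with y :: z :: _ => tri E S x y z | _ => true end) && trips E S q.
  by move=> x [|y [|z q]] //=; rewrite andbT.
elim: s => [|x s IH]; first by rewrite /= andbT.
rewrite !rcons_cons C1 IH [trips E S (x :: _)]C1 !andbA; congr (_ && _ && _).
by case: s {IH} => [|y [|z s]].
Qed.

Lemma trips_rev {p} (E : rel 'I_p) S l : trips E S (rev l) = trips E S l.
Proof.
elim: l => [|x l IH] //.
case: l IH => [|y l] IH; first by [].
case: l IH => [|z l] IH; first by rewrite /= /rev /=.
rewrite rev_cons rev_cons rev_cons trips_rcons -rev_cons -rev_cons IH.
by change (trips E S [:: x, y, z & l]) with (tri E S x y z && trips E S [:: y, z & l]);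
   rewrite tri_sym andbC.
Qed.

Lemma tripsP {p} (E : rel 'I_p) S d (l : seq 'I_p) :
  trips E S l <-> (forall n, 0 < n -> n < (size l).-1 ->
       tri E S (nth d l n.-1) (nth d l n) (nth d l n.+1)).
Proof.
elim: l => [|u t IH]; first by split => // _ [|n].
case: t IH => [|v t] IH; first by split => // _ [|n].
case: t IH => [|w r] IH; first by split => // _ [|[|n]].
rewrite trips_cons /=; split.
- move=> /andP[H1 H2] [|[|n]] // _ Hn.
  have := (proj1 IH H2 n.+1 erefl Hn). done.
- move=> H; apply/andP; split; first exact: (H 1 erefl erefl).
  apply/IH => -[|n] // _ Hn; exact: (H n.+2 erefl Hn).
Qed.

Definition Ep {p : nat} (E : rel 'I_p) (T : {set 'I_p}) : rel 'I_p :=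
  [rel u v | E u v && (v \notin T)].

Lemma desc_intro {p} {E : rel 'I_p} {u x y} : E u x -> connect E x y -> desc E u y.
Proof. by move=> H1 H2; apply/existsP; exists x; rewrite H1 H2. Qed.

Lemma acyc2 {p} {E : rel 'I_p} {u v} : acyclic E -> E u v -> E v u -> False.
Proof.
move=> Hac H1 H2; have := Hac u; rewrite (desc_intro H1 (connect1 H2)) //.
Qed.

Lemma desc_trans {p} {E : rel 'I_p} {u v w} : desc E u v -> desc E v w -> desc E u w.
Proof.
move=> /existsP[x /andP[H1 H2]] /existsP[y /andP[H3 H4]].
apply: (desc_intro H1); apply: (connect_trans H2); apply: connect_trans H4.
exact: connect1.
Qed.

Lemma path_Ep {p} (E : rel 'I_p) (T : {set 'I_p}) c s :
  path E c s -> (forall y, y \in s -> y \notin T) -> path (Ep E T) c s.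
Proof.
elim: s c => [|y s IH] c //= /andP[H1 H2] H.
apply/andP; split; first by rewrite /Ep /= H1 H ?mem_head.
apply: IH => // z Hz; apply: H.
by rewrite in_cons Hz orbT.
Qed.

Lemma chain_trips {p} (E : rel 'I_p) (T : {set 'I_p}) c q :
  acyclic E -> path (Ep E T) c q -> trips E T (c :: q).
Proof.
move=> Hac; elim: q c => [|y q IH] c //= /andP[/andP[H1 H2] H3].
rewrite -/(trips E T (y :: q)).
case: q IH H3 => [|z q] IH H3 //=.
move: H3 => /= /andP[/andP[H4 H5] H6].
rewrite -/(trips E T [:: y, z & q]) IH /= ?H4 ?H5 ?H6 // andbT.
rewrite /tri; case: (E c y && E z y) /andP => [[_ Hzy]|//].
by case: (acyc2 Hac H4 Hzy).
by rewrite /Ep /= H4 H5.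
Qed.

Lemma find_bad {p} (E : rel 'I_p) (S T : {set 'I_p}) l : trips E S l ->
  trips E T l \/ exists pre u c w m, [/\ l = pre ++ [:: u, c, w & m], tri E S u c w,
     ~~ tri E T u c w & trips E T [:: c, w & m]].
Proof.
elim: l => [|u t IH]; first by left.
case: t IH => [|v t] IH; first by left.
case: t IH => [|w m] IH; first by left.
change (trips E S [:: u, v, w & m]) with (tri E S u v w && trips E S [:: v, w & m]).
move=> /andP[H1 H2].
case: (IH H2) => [H3|[pre [u' [c [w' [m' [E1 E2 E3 E4]]]]]]].
- case H4: (tri E T u v w).
  + by left; change (trips E T [:: u, v, w & m]) with (tri E T u v w && trips E T [:: v, w & m]); rewrite H4.
  + by right; exists [::], u, v, w, m; rewrite H4.
- by right; exists (u :: pre), u', c, w', m'; rewrite E1.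
Qed.

Lemma split_ex {p} {s : seq 'I_p} {x} : x \in s -> exists s1 s2, s = s1 ++ x :: s2.
Proof. by case/splitPr => s1 s2; exists s1, s2. Qed.

Lemma adj_flipEp {p} (E : rel 'I_p) T : subrel (fun x y => Ep E T y x) (adj E).
Proof. by move=> x y /andP[H _]; rewrite /adj H orbT. Qed.

Lemma splice {p} (E : rel 'I_p) (T : {set 'I_p}) (i : 'I_p) : acyclic E ->
  forall n (q : seq 'I_p) c rr, size q <= n -> path (Ep E T) c q -> uniq (c :: q) ->
  last c q = i -> c \notin T -> path (adj E) c rr -> uniq (c :: rr) ->
  trips E T (c :: rr) -> i \notin c :: rr ->
  exists r, [/\ path (adj E) i r, uniq (i :: r), trips E T (i :: r) & last i r = last c rr].
Proof.
move=> Hac; elim=> [|n IH] q c rr Hs Hq Hu Hl HcT Hp Hur Ht Hi.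
  by case: q Hs Hl Hq Hu => // _ /= Hl; rewrite Hl mem_head in Hi.
case Hh: (has (mem (c :: rr)) q).
  case/hasP: Hh => z Hzq Hzr.
  case/splitPr: Hzq Hq Hu Hl Hs => q1 q2 Hq Hu Hl Hs.
  move: Hq; rewrite cat_path => /andP[_ /= /andP[/andP[_ HzT] Hq2]].
  have Hu2 : uniq (z :: q2) by move: Hu; rewrite -cat_cons cat_uniq => /and3P[_ _ ->].
  rewrite last_cat /= in Hl.
  have Hs2 : size q2 <= n by move: Hs; rewrite size_cat /= addnS ltnS; apply: leq_trans; apply: leq_addl.
  have [m1 [m2 EL]] := split_ex Hzr.
  have Hp2 : path (adj E) z m2.
    have : sorted (adj E) (c :: rr) by [].
    by rewrite EL => /cat_sorted2 [].
  have Hur2 : uniq (z :: m2) by move: Hur; rewrite EL cat_uniq => /and3P[_ _ ->].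
  have Ht2 : trips E T (z :: m2) by apply: (@trips_suffix _ _ _ m1); rewrite -EL.
  have Hi2 : i \notin z :: m2 by move: Hi; rewrite EL mem_cat negb_or => /andP[_ ->].
  have [r [H1 H2 H3 H4]] := IH q2 z m2 Hs2 Hq2 Hu2 Hl HzT Hp2 Hur2 Ht2 Hi2.
  exists r; split => //; rewrite H4 -(last_cons c c rr) EL last_cat //.
case/lastP: q Hs Hq Hu Hl Hh => [|b y] Hs Hq Hu Hl Hh.
  by rewrite /= in Hl; rewrite Hl mem_head in Hi.
rewrite last_rcons in Hl; subst y.
have EQ : i :: (rev b ++ c :: rr) = rev (c :: rcons b i) ++ rr.
  by rewrite rev_cons rev_rcons rcons_cons cat_cons cat_rcons.
have Hrp : path (adj E) i (rcons (rev b) c).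
  apply: (sub_path (@adj_flipEp _ E T)).
  have := rev_path (fun x y => Ep E T y x) c (rcons b i).
  by rewrite last_rcons belast_rcons rev_cons => ->.
have Hhead : E c (last i (rev b)).
  by case: b {EQ Hrp Hs Hh Hu} Hq => [|x b] /=; rewrite ?rev_cons ?last_rcons => /andP[/andP[]].
exists (rev b ++ c :: rr); split.
- by rewrite -cat_rcons cat_path Hrp last_rcons.
- rewrite EQ cat_uniq rev_uniq Hu /=.
  move: Hur => /= /andP[Hcr ->]; rewrite andbT has_sym has_rev /= negb_or Hcr /=.
  apply/hasP => -[x Hx Hxr]; move/hasP: Hh; apply; exists x => //.
  by rewrite /= in_cons Hxr orbT.
- rewrite trips_cat; apply/andP; split.
    by rewrite -rcons_cons -rev_rcons -rev_cons trips_rev; apply: chain_trips.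
  rewrite trips_cons Ht andbT.
  case: rr {Hp Hur Ht Hi EQ Hh} => [|z rr] //.
  rewrite /tri; case: (E _ c && E z c) /andP => [[Hyc _]|//].
  by case: (acyc2 Hac Hhead Hyc).
- by rewrite last_cat.
Qed.

Definition dc {p : nat} (E : rel 'I_p) (S : {set 'I_p}) (i j : 'I_p) : Prop :=
  exists r, [/\ path (adj E) i r, uniq (i :: r), trips E S (i :: r), last i r = j & i != j].

Lemma dconn_dc {p} (E : rel 'I_p) S i j : dconnected E i j S -> dc E S i j.
Proof.
case=> s [Hp Hu Ht]; exists (rcons s j); split => //.
- by apply/(tripsP _ _ i) => n H1 H2; exact: Ht n H1 H2.
- by rewrite last_rcons.
- move: Hu => /= /andP[Hi _]; apply/eqP => Eij; move: Hi.
  by rewrite Eij mem_rcons mem_head.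
Qed.

Lemma dc_dconn {p} (E : rel 'I_p) S i j : dc E S i j -> dconnected E i j S.
Proof.
case=> r [Hp Hu Ht Hl Hij].
case/lastP: r Hp Hu Ht Hl => [|s y] Hp Hu Ht Hl.
  by rewrite /= in Hl; rewrite Hl eqxx in Hij.
rewrite last_rcons in Hl; subst y.
exists s; split => //.
by move=> n H1 H2; apply: (proj1 (tripsP E S i _) Ht).
Qed.

Lemma dc_sym {p} (E : rel 'I_p) S i j : dc E S i j -> dc E S j i.
Proof.
case=> r [Hp Hu Ht Hl Hij].
case/lastP: r Hp Hu Ht Hl => [|s y] Hp Hu Ht Hl.
  by rewrite /= in Hl; rewrite Hl eqxx in Hij.
rewrite last_rcons in Hl; subst y.
have EQ : j :: rcons (rev s) i = rev (i :: rcons s j)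
  by rewrite rev_cons rev_rcons rcons_cons.
exists (rcons (rev s) i); split.
- have := rev_path (adj E) i (rcons s j).
  rewrite last_rcons belast_rcons rev_cons => ->.
  by rewrite (eq_path (e' := adj E)) // => x y; rewrite /adj orbC.
- by rewrite EQ rev_uniq.
- by rewrite EQ trips_rev.
- by rewrite last_rcons.
- by rewrite eq_sym.
Qed.

Lemma main {p} (E : rel 'I_p) (S : {set 'I_p}) (k i j : 'I_p) : acyclic E ->
  ((exists t, t \in S :\ k /\ desc E k t) \/ connect (Ep E (S :\ k)) k i) ->
  dc E S i j -> dc E (S :\ k) i j.
Proof.
move=> Hac Hk; set T := S :\ k.
case=> r [Hp Hu Ht Hl Hij].
case: (find_bad E S T (i :: r) Ht) => [HtT|[pre [u [c [w [m [EL H1 H2 H3]]]]]]].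
  by exists r; split.
have [HcT [Hno Hck]] : c \notin T /\ ((forall t, t \in T -> ~~ desc E c t) /\
                                     (c = k \/ desc E c k)).
  move: H1 H2; rewrite /tri; case: (E u c && E w c).
  - move=> /orP H1; rewrite negb_or => /andP[HcT Hno]; split => //; split.
      move=> t Ht'; apply/negP => Hd; move/negP: Hno; apply; apply/existsP; exists t.
      by rewrite Ht' Hd.
    case: H1 => [HcS|/existsP[t /andP[HtS Hdt]]].
      by left; move: HcT; rewrite in_setD1 HcS andbT negbK => /eqP.
    right; case: (t =P k) => [<- //|/eqP Htk].
    by move/negP: Hno; case; apply/existsP; exists t; rewrite in_setD1 Htk HtS Hdt.
  - by move=> HcS; rewrite negbK in_setD1 => /andP[_ HcS']; rewrite HcS' in HcS.
case: Hk => [[t [HtT Hkt]]|Hki].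
  have Hct : desc E c t by case: Hck => [->//|Hck]; exact: desc_trans Hck Hkt.
  by move: (Hno t HtT); rewrite Hct.
have Hck' : connect (Ep E T) c k.
  case: Hck => [->|/existsP[x /andP[Hcx /connectP[q Hq Hlast]]]]; first exact: connect0.
  apply/connectP; exists (x :: q); last by [].
  apply: path_Ep; first by rewrite /= Hcx Hq.
  move=> y Hy; apply/negP => HyT; move/negP: (Hno y HyT); apply.
  exact: (desc_intro Hcx (path_connect Hq Hy)).
have /connectP[q0 Hq0 Hl0] := connect_trans Hck' Hki.
case: (shortenP Hq0) Hl0 => q Hq Huq _ Hl0.
have Hsorted : sorted (adj E) (i :: r) by [].
rewrite EL -cat_rcons in Hsorted Hu.
have [_ Hp2] := cat_sorted2 Hsorted.
move: Hu; rewrite cat_uniq => /and3P[_ Hdis Hu2].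
have Hi : i \notin [:: c, w & m].
  apply/negP => Hi; move/negP: Hdis; apply; apply/hasP; exists i => //.
  have : head i (i :: r) = head i (pre ++ [:: u, c, w & m]) by rewrite EL.
  by case: (pre) => [|x pre'] /= ->; rewrite ?mem_head ?in_cons ?eqxx.
have [r' [H1' H2' H3' H4']] :=
  splice E T i Hac (size q) q c [:: w & m] (leqnn _) Hq Huq (esym Hl0) HcT Hp2 Hu2 H3 Hi.
exists r'; split => //.
rewrite H4' -Hl -(last_cons i i r) EL -cat_rcons last_cat //.
Qed.

Lemma desc_Ep {p} (E : rel 'I_p) (T : {set 'I_p}) c y :
  (forall t, t \in T -> ~~ desc E c t) -> desc E c y -> connect (Ep E T) c y.
Proof.
move=> Hno /existsP[x /andP[Hcx /connectP[q Hq Hlast]]].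
apply/connectP; exists (x :: q); last by [].
apply: path_Ep; first by rewrite /= Hcx Hq.
move=> z Hz; apply/negP => HzT; move/negP: (Hno z HzT); apply.
exact: (desc_intro Hcx (path_connect Hq Hz)).
Qed.

Theorem proposition2 (p : nat) (E : rel 'I_p) (V : {set 'I_p}) (k : 'I_p) :
  acyclic E -> k \in V -> 0 < removal_score E V k -> k \in Maximal E V.
Proof.
move=> Hac HkV Hpos.
rewrite /Maximal inE HkV /=; apply/negPn/negP => Hne.
have [t0 Ht0] := set0Pn _ Hne.
rewrite inE in Ht0; case/andP: Ht0 => Hd0 Ht0V; rewrite inE in Hd0.
move: Hpos; rewrite /removal_score card_gt0 => /set0Pn[e He].
move: He; rewrite /removed inE => /and3P[HeM HeS HeN].
move: HeM; rewrite /moral inE => /existsP[i /existsP[j /andP[/eqP Ee Hm]]].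
move: Hm => /and4P[Hij HiV HjV /asboolP Hdc].
have HiVk : i \in V :\ k by apply: (subsetP HeS); rewrite Ee set21.
have HjVk : j \in V :\ k by apply: (subsetP HeS); rewrite Ee set22.
set S := V :\ i :\ j.
set T := S :\ k.
have ET : V :\ k :\ i :\ j = T.
  by apply/setP => x; rewrite /T /S !in_setD1; do 3 case: (_ == _) => //.
have HdT : dc E T i j.
  have HdS := dconn_dc E _ _ _ Hdc.
  case: (boolP [exists t in T, desc E k t]) => [/existsP[t /andP[HtT Hkt]]|Hno].
    exact: (main E S k i j Hac (or_introl (ex_intro _ t (conj HtT Hkt))) HdS).
  have Hno' : forall t, t \in T -> ~~ desc E k t.
    by move=> t HtT; apply/negP => Hkt; move/negP: Hno; apply; apply/existsP; exists t; rewrite HtT.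
  have Hk0 : t0 != k by apply/eqP => Ek; move: (Hac k); rewrite -{2}Ek Hd0.
  have Ht0T : t0 \notin T by apply/negP => H; move: (Hno' _ H); rewrite Hd0.
  move: Ht0T; rewrite /T /S !in_setD1 Hk0 Ht0V /= andbT negb_and !negbK => /orP[/eqP Etj|/eqP Eti].
    apply: (dc_sym E); apply: (main E S k j i Hac _ (dc_sym E _ _ _ HdS)); right.
    by rewrite -Etj; apply: desc_Ep.
  apply: (main E S k i j Hac _ HdS); right; rewrite -Eti; exact: desc_Ep.
move/negP: HeN; apply; rewrite /moral inE; apply/existsP; exists i; apply/existsP; exists j.
rewrite Ee eqxx /moral_edge Hij HiVk HjVk /=; apply/asboolP.
by rewrite ET; apply: (dc_dconn E).
Qed.
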